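(* Let $\mathcal{T}$ be a finite or countably infinite set, let $\prec$ be a strict total order on $\mathcal{T}$, and let $\mathbf{p} \ne \mathbf{q}$ be two probability distributions on $\mathcal{T}$. For a positive integer $m$, let $X_0 \sim \mathbf{q}$, $X_1,\dots,X_m \sim^{\mathrm{iid}} \mathbf{p}$, $U_0,\dots,U_m \sim^{\mathrm{iid}} \mathrm{Uniform}(0,1)$ be mutually independent, and let $R = \sum_{j=1}^m \big(\mathbb{I}[X_j \prec X_0] + \mathbb{I}[X_j = X_0, U_j < U_0]\big)$. Then there is some $M \ge 1$ such that, for $m = M$, $R$ is not uniformly distributed on $\{0,1,\dots,M\}$.
   Context: $\mathbb{I}[\cdot]$ denotes the indicator of an event; $R$ depends on $m$. *)

(* Defs.v *)
From HB Require Import structures.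
From mathcomp Require Import all_boot all_order all_algebra.
From mathcomp Require Import all_classical all_reals all_analysis.
Set Implicit Arguments. Unset Strict Implicit. Unset Printing Implicit Defensive.
Import Order.TTheory GRing.Theory Num.Theory.
Local Open Scope classical_set_scope.
Local Open Scope ring_scope.

Definition strict_total_order (T : eqType) (lt : rel T) : Prop :=
  [/\ (forall x, ~~ lt x x),
      (forall x y z, lt x y -> lt y z -> lt x z) &
      (forall x y, [|| lt x y, x == y | lt y x])].

Definition is_pmf (R : realType) (T : countType) (p : T -> R) : Prop :=
  (forall x, 0 <= p x) /\ (\esum_(x in [set: T]) (p x)%:E = 1)%E.

Definition has_pmf_law (d : measure_display) (Omega : measurableType d)
  (R : realType) (P : probability Omega R) (T : countType)
  (X : Omega -> T) (p : T -> R) : Prop :=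
  forall A : set T, P (X @^-1` A) = (\esum_(x in A) (p x)%:E)%E.

Definition is_uniform01 (d : measure_display) (Omega : measurableType d)
  (R : realType) (P : probability Omega R) (U : Omega -> R) : Prop :=
  forall B : set R, measurable B ->
    P (U @^-1` B) = (@lebesgue_measure R) (B `&` `[0, 1]).

Definition mutually_independent (d : measure_display) (Omega : measurableType d)
  (R : realType) (P : probability Omega R) (T : countType)
  (m : nat) (X : nat -> Omega -> T) (U : nat -> Omega -> R) : Prop :=
  forall (A : nat -> set T) (B : nat -> set R), (forall i, measurable (B i)) ->
    P (\bigcap_(i in [set i | (i <= m)%N]) (X i @^-1` A i `&` U i @^-1` B i)) =
    (\prod_(i < m.+1) (P (X i @^-1` A i) * P (U i @^-1` B i)))%E.

Definition rank_stat (Omega : Type) (R : realType) (T : countType) (lt : rel T)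
  (m : nat) (X : nat -> Omega -> T) (U : nat -> Omega -> R) (w : Omega) : nat :=
  \sum_(1 <= j < m.+1)
    (lt (X j w) (X 0%N w) + ((X j w == X 0%N w) && (U j w < U 0%N w)%R))%N.

(* Main.v *)
Require Import Defs.
From HB Require Import structures.
From mathcomp Require Import all_boot all_order all_algebra.
From mathcomp Require Import all_classical all_reals all_analysis.
From mathcomp Require Import measurable_realfun.
From mathcomp.algebra_tactics Require Import ring lra.
From mathcomp Require Import zify.
From Stdlib Require Import Lia.
Import Order.TTheory GRing.Theory Num.Theory.
Local Open Scope classical_set_scope.
Local Open Scope ring_scope.


Section Alg.
Variable R : realType.
Variable M : nat.
Variables (w h : 'I_3 -> R).

Lemma sum_prodw : \sum_(s : {ffun 'I_M -> 'I_3}) \prod_j w (s j) = (\sum_t w t) ^+ M.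
Proof.
by rewrite -(bigA_distr_bigA (fun (_ : 'I_M) t => w t)) prodr_const card_ord.
Qed.

Lemma var_id (hw1 : \sum_t w t = 1) (hw0 : \sum_t w t * h t = 0) :
  \sum_(s : {ffun 'I_M -> 'I_3}) (\prod_j w (s j)) * (\sum_j h (s j))^+2
  = M%:R * \sum_t w t * h t ^+ 2.
Proof.
have E1 (s : {ffun 'I_M -> 'I_3}) : (\prod_j w (s j)) * (\sum_j h (s j))^+2 =
   \sum_j \sum_k \prod_i (w (s i) * (if i == j then h (s i) else 1)
                                  * (if i == k then h (s i) else 1)).
  rewrite expr2 mulr_suml mulr_sumr. apply: eq_bigr => j _.
  rewrite mulrA mulr_sumr; apply: eq_bigr => k _.
  rewrite !big_split /= -!big_mkcond !big_pred1_eq; ring.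
under eq_bigr do rewrite E1.
rewrite exchange_big /=.
under eq_bigr => j _ do rewrite exchange_big /=.
have E2 j k : \sum_(s : {ffun 'I_M -> 'I_3}) \prod_i (w (s i) * (if i == j then h (s i) else 1)
                                  * (if i == k then h (s i) else 1))
   = if k == j then \sum_t w t * h t ^+ 2 else 0.
  rewrite -(bigA_distr_bigA (fun i t => w t * (if i == j then h t else 1)
                                  * (if i == k then h t else 1))) /=.
  rewrite (bigD1 j) //= eqxx.
  case: (eqVneq k j) => [->|njk]; rewrite ?eqxx ?(negPf njk).
    rewrite [X in _ * X]big1 ?mulr1; last first.
      move=> i /negPf ->; under eq_bigr do rewrite !mulr1; exact: hw1.
    by under [RHS]eq_bigr do rewrite expr2 mulrA.
  have -> : \sum_(t < 3) w t * h t * 1 = 0.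
    by rewrite -[RHS]hw0; apply: eq_bigr => t _; rewrite mulr1.
  by rewrite mul0r.
under eq_bigr => j _ do under eq_bigr => k _ do rewrite E2.
under eq_bigr => j _ do rewrite -big_mkcond big_pred1_eq.
by rewrite sumr_const card_ord mulr_natl.
Qed.

Lemma cheb (P : pred {ffun 'I_M -> 'I_3}) (D : R) (hD : 0 < D)
  (hw : forall t, 0 <= w t)
  (hP : forall s, P s -> D ^+ 2 <= (\sum_j h (s j))^+2) :
  \sum_(s | P s) (\prod_j w (s j)) * D ^+ 2 <=
  \sum_(s : {ffun 'I_M -> 'I_3}) (\prod_j w (s j)) * (\sum_j h (s j))^+2.
Proof.
rewrite [X in _ <= X](bigID P) /= -[X in X <= _]addr0.
apply: lerD.
  apply: ler_sum => s Ps; apply: ler_wpM2l; last exact: hP.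
  by apply: prodr_ge0 => i _.
apply: sumr_ge0 => s _; apply: mulr_ge0; last exact: sqr_ge0.
by apply: prodr_ge0.
Qed.

Lemma cheb_full (P : pred {ffun 'I_M -> 'I_3}) (D : R) (hD : 0 < D)
  (hw : forall t, 0 <= w t) (hw1 : \sum_t w t = 1) (hw0 : \sum_t w t * h t = 0)
  (hh : forall t, h t ^+ 2 <= 1)
  (hP : forall s, P s -> D ^+ 2 <= (\sum_j h (s j))^+2) :
  (\sum_(s | P s) \prod_j w (s j)) * D ^+ 2 <= M%:R.
Proof.
rewrite mulr_suml; apply: le_trans; first exact: (cheb P D hD hw hP).
rewrite var_id // -[leRHS]mulr1; apply: ler_wpM2l => //.
rewrite -hw1; apply: ler_sum => t _; rewrite -[leRHS]mulr1.
exact: ler_wpM2l.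
Qed.
End Alg.


Lemma count_itv N c1 c2 :
  (\sum_(k < N | (c1 <= k <= c2)%N) 1 = minn N c2.+1 - c1)%N.
Proof.
rewrite -(big_mkord (fun k => (c1 <= k <= c2)%N) (fun _ => 1%N)).
elim: N => [|N IH]; first by rewrite big_geq // min0n.
rewrite big_mkcond big_nat_recr //= -big_mkcond IH.
case: ifP => /andP; lia.
Qed.



Section Fin.
Context d (Omega : measurableType d) (R : realType) (P : probability Omega R).

Lemma disj_seq (I : eqType) (r : seq I) (Pr : pred I) (F : I -> set Omega) a :
  (forall i j, i != j -> F i `&` F j = set0) -> a \notin r ->
  F a `&` \big[setU/set0]_(i <- r | Pr i) F i = set0.
Proof.
move=> hd; elim: r => [|b r IH]; first by rewrite big_nil setI0.
rewrite in_cons negb_or => /andP[ab anr]; rewrite big_cons.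
case: (Pr b); last exact: IH.
by rewrite setIUr hd // IH // setU0.
Qed.

Lemma meas_seqU (I : eqType) (r : seq I) (Pr : pred I) (F : I -> set Omega) :
  (forall i, measurable (F i)) ->
  (forall i j, i != j -> F i `&` F j = set0) -> uniq r ->
  P (\big[setU/set0]_(i <- r | Pr i) F i) = (\sum_(i <- r | Pr i) P (F i))%E.
Proof.
move=> hm hd; elim: r => [|a r IH]; first by rewrite !big_nil measure0.
move=> /= /andP[anr ur]; rewrite !big_cons; case: (Pr a); last exact: IH.
rewrite measureU //.
- by congr (_ + _)%E; exact: (IH ur).
- exact: bigsetU_measurable.
- exact: disj_seq.
Qed.


Lemma meas_finU (I : finType) (Pr : pred I) (F : I -> set Omega) :
  (forall i, measurable (F i)) ->
  (forall i j, i != j -> F i `&` F j = set0) ->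
  P (\big[setU/set0]_(i | Pr i) F i) = (\sum_(i | Pr i) P (F i))%E.
Proof. by move=> hm hd; apply: meas_seqU => //; exact: index_enum_uniq. Qed.

Lemma meas_const_prop (Q : Prop) : measurable [set _ : Omega | Q].
Proof.
case: (pselect Q) => hQ.
  by rewrite (_ : [set _ | Q] = setT) //; apply/seteqP; split.
by rewrite (_ : [set _ | Q] = set0) //; apply/seteqP; split.
Qed.

Lemma meas_if (b : Omega -> bool) (Q : bool -> Omega -> Prop) :
  measurable [set w | b w] -> measurable [set w | Q true w] ->
  measurable [set w | Q false w] -> measurable [set w | Q (b w) w].
Proof.
move=> mb mt mf.
rewrite (_ : [set w | Q (b w) w] =
  ([set w | b w] `&` [set w | Q true w]) `|` (~` [set w | b w] `&` [set w | Q false w])).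
  by apply: measurableU; apply: measurableI => //; exact: measurableC.
apply/seteqP; split => w /=.
  case: (b w) => h. by left. by right.
move=> [[hb hq]|[hb hq]].
  by rewrite hb.
by move/negP/negbTE: hb => ->.
Qed.
Lemma meas_bool3 (b1 b2 b3 : Omega -> bool) (g : bool -> bool -> bool -> Prop) :
  measurable [set w | b1 w] -> measurable [set w | b2 w] -> measurable [set w | b3 w] ->
  measurable [set w | g (b1 w) (b2 w) (b3 w)].
Proof.
move=> m1 m2 m3.
have H3 x y : measurable [set w | g x y (b3 w)].
  apply: (@meas_if b3 (fun z _ => g x y z)) => //; exact: meas_const_prop.
have H2 x : measurable [set w | g x (b2 w) (b3 w)].
  apply: (@meas_if b2 (fun y w => g x y (b3 w))) => //; exact: H3.
apply: (@meas_if b1 (fun x w => g x (b2 w) (b3 w))) => //; exact: H2.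
Qed.
End Fin.

Ltac mcp := cbv beta; apply: meas_const_prop.

Section MeasR.
Context d (Omega : measurableType d) (R : realType) (T : countType) (lt : rel T).
Variables (M : nat) (X : nat -> Omega -> T) (U : nat -> Omega -> R).
Hypothesis hXm : forall i, (i <= M)%N -> forall A : set T, measurable (X i @^-1` A).
Hypothesis hUm : forall i, (i <= M)%N -> measurable_fun setT (U i).

Lemma meas_b1 j : (j <= M)%N -> measurable [set w | lt (X j w) (X 0%N w)].
Proof.
move=> hj.
rewrite (_ : [set w | lt (X j w) (X 0%N w)] =
  \bigcup_(x : T) (X 0%N @^-1` [set x] `&` X j @^-1` [set y | lt y x])).
  apply: countable_bigcupT_measurable; first exact: countableP.
  by move=> x; apply: measurableI; apply: hXm.
apply/seteqP; split => w /=.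
  by move=> h; exists (X 0%N w).
by move=> [x _ /= [-> h]].
Qed.

Lemma meas_b2 j : (j <= M)%N -> measurable [set w | X j w == X 0%N w].
Proof.
move=> hj.
rewrite (_ : [set w | X j w == X 0%N w] =
  \bigcup_(x : T) (X 0%N @^-1` [set x] `&` X j @^-1` [set x])).
  apply: countable_bigcupT_measurable; first exact: countableP.
  by move=> x; apply: measurableI; apply: hXm.
apply/seteqP; split => w /=.
  by move=> /eqP h; exists (X 0%N w).
by move=> [x _ /= [-> ->]].
Qed.

Lemma meas_b3 j : (j <= M)%N -> measurable [set w | (U j w < U 0%N w)%R].
Proof.
move=> hj.
have hm := measurable_fun_ltr (hUm _ hj) (hUm _ (leq0n M)).
have := hm measurableT [set true] I.
rewrite setTI.
by congr measurable; apply/seteqP; split => w /=.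
Qed.

Definition fterm j w : nat :=
  (lt (X j w) (X 0%N w) + ((X j w == X 0%N w) && (U j w < U 0%N w)%R))%N.

Lemma meas_fterm j v : (j <= M)%N -> measurable [set w | fterm j w = v].
Proof.
move=> hj; rewrite /fterm.
have H := (@meas_bool3 _ _ (fun w => lt (X j w) (X 0%N w)) (fun w => X j w == X 0%N w)
  (fun w => (U j w < U 0%N w)%R) (fun x y z => (x + (y && z))%N = v)
  (@meas_b1 j hj) (@meas_b2 j hj) (@meas_b3 j hj)).
exact H.
Qed.

Lemma meas_sum n k : (n <= M)%N ->
  measurable [set w | (\sum_(1 <= j < n.+1) fterm j w)%N = k].
Proof.
elim: n k => [|n IH] k hn.
  under eq_set do rewrite big_geq //.
  mcp.
rewrite (_ : [set w | (\sum_(1 <= j < n.+2) fterm j w)%N = k] =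
  \bigcup_(v in [set v | (v < k.+1)%N])
     ([set w | (\sum_(1 <= j < n.+1) fterm j w)%N = (k - v)%N] `&`
      [set w | fterm n.+1 w = v])).
  apply: bigcup_measurable => v _; apply: measurableI.
    by apply: IH; apply: ltnW.
  exact: meas_fterm.
apply/seteqP; split => w /=.
  rewrite big_nat_recr //= => hk.
  exists (fterm n.+1 w); first by rewrite /= -hk ltnS leq_addl.
  by split => //; rewrite -hk addnK.
move=> [v /= hv [h1 h2]].
by rewrite big_nat_recr //= h1 h2; lia.
Qed.

Lemma meas_rank k : measurable [set w | rank_stat lt M X U w = k].
Proof. exact: meas_sum. Qed.
End MeasR.


Definition c0 : 'I_3 := @Ordinal 3 0 isT.
Definition c1 : 'I_3 := @Ordinal 3 1 isT.
Definition c2 : 'I_3 := @Ordinal 3 2 isT.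

Lemma sum3 (V : zmodType) (f : 'I_3 -> V) : \sum_(t < 3) f t = f c0 + f c1 + f c2.
Proof.
rewrite !big_ord_recr big_ord0 /= add0r.
by congr (f _ + f _ + f _); apply: val_inj.
Qed.

Section Ev.
Context (R : realType) (T : countType) (lt : rel T) (x0 : T).
Context d (Omega : measurableType d) (P : probability Omega R).
Variables (M : nat) (X : nat -> Omega -> T) (U : nat -> Omega -> R) (p q : T -> R).
Hypothesis hirr : forall x, ~~ lt x x.
Hypothesis hp0 : forall x, 0 <= p x.
Hypothesis hq0 : forall x, 0 <= q x.
Hypothesis hM : (1 <= M)%N.
Hypothesis hXm : forall i, (i <= M)%N -> forall A : set T, measurable (X i @^-1` A).
Hypothesis hX0 : has_pmf_law P (X 0%N) q.
Hypothesis hXj : forall j, (1 <= j <= M)%N -> has_pmf_law P (X j) p.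
Hypothesis hind : mutually_independent P M X U.

Definition cls (y : T) : 'I_3 := if lt y x0 then c0 else if y == x0 then c1 else c2.

Definition Ev (s : {ffun 'I_M -> 'I_3}) : set Omega :=
  [set w | X 0%N w = x0 /\ forall j : 'I_M, cls (X j.+1 w) = s j].

Definition sf (s : {ffun 'I_M -> 'I_3}) (j : nat) : 'I_3 :=
  if @insub _ (fun j => (j < M)%N) 'I_M j is Some o then s o else c0.

Lemma sfE s (j : 'I_M) : sf s j = s j.
Proof. by rewrite /sf valK. Qed.

Lemma sfE' s j (h : (j < M)%N) : sf s j = s (Ordinal h).
Proof. by rewrite -(sfE s (Ordinal h)). Qed.

Definition As (s : {ffun 'I_M -> 'I_3}) (i : nat) : set T :=
  if i is j.+1 then [set y | cls y = sf s j] else [set x0].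

Lemma Ev_eq s : Ev s =
  \bigcap_(i in [set i | (i <= M)%N]) (X i @^-1` As s i `&` U i @^-1` setT).
Proof.
apply/seteqP; split => w /=.
  move=> [h0 hj] [|i] /= hi; split => //.
  by rewrite (hj (Ordinal hi)) sfE'.
move=> h; split; first by have [] := h 0%N (leq0n M).
move=> j; have [] := h j.+1 (ltn_ord j); rewrite /= => -> _.
by rewrite sfE.
Qed.

Lemma Ev_meas s : measurable (Ev s).
Proof.
rewrite Ev_eq; apply: bigcap_measurableType => i /= hi.
by apply: measurableI; [exact: hXm | rewrite preimage_setT].
Qed.

Lemma Ev_disj s s' : s != s' -> Ev s `&` Ev s' = set0.
Proof.
move=> hs; apply/seteqP; split => // w [[_ h1] [_ h2]].
move/eqP: hs; apply; apply/ffunP => j.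
by rewrite -h1 h2.
Qed.

Definition W (t : 'I_3) := (\esum_(y in [set y | cls y = t]) (p y)%:E)%E.
Definition wt (t : 'I_3) : R := fine (W t).

Lemma W_P t : W t = P (X 1%N @^-1` [set y | cls y = t]).
Proof. by rewrite (hXj 1%N) ?hM. Qed.

Lemma W_fin t : W t = (wt t)%:E.
Proof.
rewrite /wt fineK // W_P; apply: fin_num_measure; exact: hXm.
Qed.

Lemma wt_ge0 t : 0 <= wt t.
Proof. by rewrite -lee_fin -W_fin; apply: esum_ge0 => y _; rewrite lee_fin. Qed.

Lemma wt_c1 : wt c1 = p x0.
Proof.
apply: EFin_inj; rewrite -W_fin /W.
rewrite (_ : [set y | cls y = c1] = [set x0]) ?esum_set1 ?lee_fin //.
apply/seteqP; split => y /=.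
  by rewrite /cls; case: ifP => // _; case: eqP.
by move=> ->; rewrite /cls (negbTE (hirr x0)) eqxx.
Qed.

Lemma wt_sum : \sum_t wt t = 1.
Proof.
apply: EFin_inj; rewrite sum3 !EFinD -!W_fin !W_P.
set F := fun t => X 1%N @^-1` [set y | cls y = t].
have mF t : measurable (F t) by exact: hXm.
have dF t t' : t != t' -> F t `&` F t' = set0.
  by move=> h; apply/seteqP; split => // w [e1 e2]; move/eqP: h; apply; rewrite -e1 -e2.
rewrite -!measureU.
2-7: first [exact: hXm | (apply: measurableU; exact: hXm) | exact: (dF c0 c1) |
            (by rewrite setIUl (dF c0 c2) // (dF c1 c2) // setU0)].
rewrite -(probability_setT P); congr (P _).
apply/seteqP; split => // w _ /=; rewrite /F /=.
by case: (cls (X 1%N w)) => -[|[|[|]]] //= ?; [left;left|left;right|right]; apply: val_inj.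
Qed.

Lemma P_Ev s : P (Ev s) = (q x0 * \prod_j wt (s j))%:E.
Proof.
rewrite Ev_eq hind; last by move=> _; exact: measurableT.
rewrite big_ord_recl /= preimage_setT probability_setT mule1.
rewrite hX0 esum_set1 ?lee_fin // EFinM; congr (_ * _)%E.
rewrite -prodEFin; apply: eq_bigr => j _.
rewrite mule1 /bump /= add1n (hXj j.+1); last by rewrite /= ltn_ord.
rewrite add0n sfE; exact: W_fin.
Qed.

End Ev.


Lemma exists_gt (R : realType) (T : countType) (p q : T -> R) :
  (forall x, 0 <= p x) -> (forall x, 0 <= q x) ->
  (\esum_(x in [set: T]) (p x)%:E = 1)%E -> (\esum_(x in [set: T]) (q x)%:E = 1)%E ->
  p <> q -> exists x, p x < q x.
Proof.
move=> hp hq sp sq hpq; apply: contrapT => H.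
have hle x : q x <= p x.
  by rewrite leNgt; apply/negP => h; apply: H; exists x.
have [x1 hx1] : exists x1, p x1 != q x1.
  apply: contrapT => H2; apply: hpq; apply: funext => x.
  by apply/eqP; apply: contrapT => h; apply: H2; exists x; apply/negP.
have lt1 : q x1 < p x1 by rewrite lt_neqAle eq_sym hx1 hle.
have : (\esum_(x in [set: T]) (p x)%:E =
        \esum_(x in [set: T]) (q x)%:E + \esum_(x in [set: T]) ((p x - q x)%:E))%E.
  rewrite -esumD //; last by move=> x _; rewrite lee_fin subr_ge0.
  - by apply: eq_esum => x _; rewrite -EFinD addrC subrK.
  - by move=> x _; rewrite lee_fin.
have hr : ((p x1 - q x1)%:E <= \esum_(x in [set: T]) ((p x - q x)%:E))%E.
  apply: esum_ge; exists [set x1]; first by split => //; exact: finite_set1.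
  by rewrite fsbig_set1.
rewrite sp sq; move: hr; case: (\esum_(x in [set: T]) ((p x - q x)%:E))%E => //.
move=> r; rewrite lee_fin => hr /esym/eqP; rewrite -EFinD eqe => /eqP h.
have : p x1 - q x1 <= 0 by lra.
by rewrite subr_le0 leNgt lt1.
Qed.


Lemma term_bound {T : countType} (lt : rel T) (x0 y : T) (bb : bool) :
  (forall x, ~~ lt x x) ->
  ((cls T lt x0 y == c0) <= lt y x0 + ((y == x0) && bb) <= (cls T lt x0 y != c2))%N.
Proof.
move=> hirr; rewrite /cls.
case: (boolP (lt y x0)) => h /=.
  have -> : (y == x0) = false.
    by apply/negP => /eqP e; move: h; rewrite e (negbTE (hirr x0)).
  by [].
by case: (y == x0); case: bb.
Qed.

Definition K0 (R : realType) (e : R) := (2 + 128 / e ^+ 2) / e.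
Arguments K0 {R}.

Section Main.
Context (R : realType) (T : countType) (lt : rel T) (x0 : T).
Context d (Omega : measurableType d) (P : probability Omega R).
Variables (M : nat) (X : nat -> Omega -> T) (U : nat -> Omega -> R) (p q : T -> R).
Hypothesis hirr : forall x, ~~ lt x x.
Hypothesis hp0 : forall x, 0 <= p x.
Hypothesis hq0 : forall x, 0 <= q x.
Hypothesis hM : (1 <= M)%N.
Hypothesis hXm : forall i, (i <= M)%N -> forall A : set T, measurable (X i @^-1` A).
Hypothesis hUm : forall i, (i <= M)%N -> measurable_fun setT (U i).
Hypothesis hX0 : has_pmf_law P (X 0%N) q.
Hypothesis hXj : forall j, (1 <= j <= M)%N -> has_pmf_law P (X j) p.
Hypothesis hind : mutually_independent P M X U.
Hypothesis hx0 : p x0 < q x0.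
Hypothesis hMK : K0 (q x0 - p x0) < M%:R.
Hypothesis Hall : forall k, (k <= M)%N ->
  P [set w | rank_stat lt M X U w = k] = ((M.+1)%:R^-1)%:E.

Let w := wt R T lt x0 p.
Let ev := Ev T lt x0 d Omega M X.
Let a := w c0.
Let p0 := w c1.
Let b := a + p0.
Let e := q x0 - p x0.
Let dl := e / 4.
Let c1n := Num.truncn (M%:R * (a - dl) + 1).
Let c2n := Num.truncn (M%:R * (b + dl)).
Let NL (s : {ffun 'I_M -> 'I_3}) := (\sum_(j < M) (s j == c0))%N.
Let NLE (s : {ffun 'I_M -> 'I_3}) := (\sum_(j < M) (s j != c2))%N.
Let good (s : {ffun 'I_M -> 'I_3}) := ((c1n <= NL s) && (NLE s <= c2n))%N.
Let S := \sum_(s | good s) \prod_j w (s j).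
Let cnt := (\sum_(k < M.+1 | (c1n <= k <= c2n)%N) 1)%N.

Lemma rank_bounds s w0 : ev s w0 ->
  (NL s <= rank_stat lt M X U w0 <= NLE s)%N.
Proof.
move=> [h0 hj]; rewrite /rank_stat big_add1 /= big_mkord /NL /NLE.
apply/andP; split; apply: leq_sum => j _; rewrite h0 -(hj j).
  by have /andP[] := term_bound (T:=T) lt x0 (X j.+1 w0) (U j.+1 w0 < U 0%N w0) hirr.
by have /andP[] := term_bound (T:=T) lt x0 (X j.+1 w0) (U j.+1 w0 < U 0%N w0) hirr.
Qed.


Let hw_ge0 : forall t, 0 <= w t := @wt_ge0 R T lt x0 d Omega P M X p hp0 hM hXm hXj.
Let hw_sum : \sum_t w t = 1 := @wt_sum R T lt x0 d Omega P M X p hM hXm hXj.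
Let hw_c1 : w c1 = p x0 := @wt_c1 R T lt x0 d Omega P M X p hirr hp0 hM hXm hXj.

Lemma PE : P (\big[setU/set0]_(s | good s) ev s) = (q x0 * S)%:E.
Proof.
rewrite /ev meas_finU.
- under eq_bigr => s _ do rewrite (@P_Ev R T lt x0 d Omega P M X U p q hq0 hM hXm hX0 hXj hind s).
  by rewrite sumEFin mulr_sumr.
- move=> s; exact: (@Ev_meas R T lt x0 d Omega M X U hXm s).
- move=> s s' h; exact: Ev_disj.
Qed.

Lemma PF : P (\big[setU/set0]_(k < M.+1 | (c1n <= k <= c2n)%N)
               [set w0 | rank_stat lt M X U w0 = k]) = (cnt%:R * (M.+1)%:R^-1)%:E.
Proof.
rewrite meas_finU.
- rewrite (eq_bigr (fun _ => ((M.+1)%:R^-1)%:E)); last by move=> k _; apply: Hall; rewrite -ltnS.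
  rewrite sumEFin /cnt natr_sum mulr_suml; congr (_%:E); apply: eq_bigr => k _.
  by rewrite mul1r.
- move=> k; exact: meas_rank.
- move=> i j hij; apply/seteqP; split => // w0 [/= h1 h2].
  by move/eqP: hij; apply; apply: val_inj; rewrite /= -h1 -h2.
Qed.


Lemma EF : \big[setU/set0]_(s | good s) ev s `<=`
   \big[setU/set0]_(k < M.+1 | (c1n <= k <= c2n)%N) [set w0 | rank_stat lt M X U w0 = k].
Proof.
rewrite -!bigcup_seq_cond => w0 [s /= /andP[_ hg] hw].
have /andP[r1 r2] := rank_bounds s w0 hw.
move: hg; rewrite /good => /andP[g1 g2].
have hr : (rank_stat lt M X U w0 < M.+1)%N.
  rewrite ltnS (leq_trans r2) // /NLE.
  rewrite -[leqRHS]card_ord -sum1_card; apply: leq_sum => j _; exact: leq_b1.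
exists (Ordinal hr) => /=; last by [].
rewrite mem_index_enum /=; apply/andP; split.
  exact: leq_trans g1 r1.
exact: leq_trans r2 g2.
Qed.

Lemma key1 : q x0 * S <= cnt%:R * (M.+1)%:R^-1.
Proof.
rewrite -lee_fin -PE -PF; apply: le_measure; rewrite ?inE.
- apply: bigsetU_measurable => s _; exact: (@Ev_meas R T lt x0 d Omega M X U hXm s).
- apply: bigsetU_measurable => k _; exact: meas_rank.
- exact: EF.
Qed.


Let hw3 : w c0 + w c1 + w c2 = 1.
Proof. by rewrite -sum3. Qed.

Let he : 0 < e.
Proof. by rewrite /e subr_gt0. Qed.

Let hdl : 0 < dl.
Proof. by rewrite /dl divr_gt0. Qed.

Let hMpos : 0 < M%:R :> R.
Proof. by rewrite ltr0n. Qed.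

Let hsumh (h : 'I_3 -> R) (c : pred 'I_3) (z : R) (s : {ffun 'I_M -> 'I_3}) :
  \sum_j ((c (s j))%:R - z) = (\sum_(j < M) c (s j))%N%:R - M%:R * z.
Proof.
rewrite sumrB natr_sum sumr_const card_ord mulr_natl; congr (_ - _).
Qed.

Lemma B1_bound :
  (\sum_(s | (NL s < c1n)%N) \prod_j w (s j)) * (M%:R * dl) ^+ 2 <= M%:R.
Proof.
have h0 := hw_ge0 c0; have h1 := hw_ge0 c1; have h2 := hw_ge0 c2; have H3 := hw3; have Hdl := hdl.
apply: (@cheb_full R M w (fun t => (t == c0)%:R - a) (fun s => (NL s < c1n)%N) (M%:R * dl)).
- exact: mulr_gt0.
- exact: hw_ge0.
- exact: hw_sum.
- rewrite sum3 /= /a.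
  have -> : w c2 = 1 - w c0 - w c1 by lra.
  ring.
- move=> t; rewrite /a; case: (t == c0) => /=; nra.
- move=> s /= hs.
  rewrite (hsumh (fun _ => 0) (fun t => t == c0)) -/(NL s).
  have : (NL s).+1%:R <= M%:R * (a - dl) + 1.
    by rewrite -truncn_gt_nat.
  rewrite -natr1 => hh.
  have hx : M%:R * dl <= M%:R * a - (NL s)%:R by lra.
  have hp : 0 <= M%:R * dl by apply: mulr_ge0; [exact: ler0n | exact: ltW].
  rewrite -[X in _ <= X]sqrrN opprB ler_sqr ?nnegrE //; lra.
Qed.

Lemma B2_bound :
  (\sum_(s | (c2n < NLE s)%N) \prod_j w (s j)) * (M%:R * dl) ^+ 2 <= M%:R.
Proof.
have h0 := hw_ge0 c0; have h1 := hw_ge0 c1; have h2 := hw_ge0 c2; have H3 := hw3; have Hdl := hdl.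
apply: (@cheb_full R M w (fun t => (t != c2)%:R - b) (fun s => (c2n < NLE s)%N) (M%:R * dl)).
- exact: mulr_gt0.
- exact: hw_ge0.
- exact: hw_sum.
- rewrite sum3 /= /b /a /p0.
  have -> : w c2 = 1 - w c0 - w c1 by lra.
  ring.
- move=> t; rewrite /b /a /p0; case: (t != c2) => /=; nra.
- move=> s /= hs.
  rewrite (hsumh (fun _ => 0) (fun t => t != c2)) -/(NLE s).
  have : M%:R * (b + dl) < (NLE s)%:R.
    rewrite -truncn_lt_nat //.
    apply: mulr_ge0; first exact: ler0n.
    rewrite /b /a /p0; lra.
  move=> hh.
  have hx : M%:R * dl <= (NLE s)%:R - M%:R * b by lra.
  have hp : 0 <= M%:R * dl by apply: mulr_ge0; [exact: ler0n | exact: ltW].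
  rewrite ler_sqr ?nnegrE //; lra.
Qed.


Lemma S_B : 1 <= S + (\sum_(s | (NL s < c1n)%N) \prod_j w (s j))
                 + (\sum_(s | (c2n < NLE s)%N) \prod_j w (s j)).
Proof.
have h1 : \sum_(s : {ffun 'I_M -> 'I_3}) \prod_j w (s j) = 1.
  by rewrite sum_prodw hw_sum expr1n.
rewrite -{1}h1 (bigID good) /= -addrA lerD2l /S.
rewrite [X in X <= _]big_mkcond [X in _ <= X + _]big_mkcond [X in _ <= _ + X]big_mkcond -big_split /=.
apply: ler_sum => s _.
have hp : 0 <= \prod_j w (s j) by apply: prodr_ge0 => j _; exact: hw_ge0.
rewrite /good; case: (ltnP (NL s) c1n) => h1'; case: (leqP (NLE s) c2n) => h2' /=.
- lra.
- lra.
- by rewrite addr0.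
- lra.
Qed.

Lemma cnt_bound : cnt%:R <= M%:R * (p0 + 2 * dl) + 1.
Proof.
have hc : (cnt + c1n <= c2n.+1 \/ cnt = 0)%N.
  rewrite /cnt count_itv; lia.
have hc1 : M%:R * (a - dl) < c1n%:R.
  have := truncnS_gt (M%:R * (a - dl) + 1); rewrite -/c1n -natr1; lra.
have hc2 : c2n%:R <= M%:R * (b + dl).
  rewrite truncn_le; apply: mulr_ge0; first exact: ler0n.
  have := hw_ge0 c0; have := hw_ge0 c1; have := hdl; rewrite /b /a /p0; lra.
have hp0' : 0 <= p0 := hw_ge0 c1.
have hM' : 0 <= M%:R :> R := ler0n _ _.
have Hdl := hdl.
case: hc => [hc|->]; last by rewrite /= ; nra.
have : (cnt + c1n)%:R <= c2n.+1%:R :> R by rewrite ler_nat.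
rewrite natrD -natr1; rewrite /b in hc2; nra.
Qed.

Lemma q0_le1 : q x0 <= 1.
Proof.
rewrite -lee_fin -(esum_set1 (a := fun x => (q x)%:E)) ?lee_fin // -hX0.
apply: probability_le1; exact: hXm.
Qed.

Lemma contra : False.
Proof.
have k1 := key1.
have k2 := cnt_bound.
have k3 := S_B.
have k4 := B1_bound.
have k5 := B2_bound.
have k6 := q0_le1.
set B1 := \sum_(s | (NL s < c1n)%N) \prod_j w (s j) in k3 k4.
set B2 := \sum_(s | (c2n < NLE s)%N) \prod_j w (s j) in k3 k5.
have hB1 : 0 <= B1 by apply: sumr_ge0 => s _; apply: prodr_ge0 => j _; exact: hw_ge0.
have hB2 : 0 <= B2 by apply: sumr_ge0 => s _; apply: prodr_ge0 => j _; exact: hw_ge0.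
have hS : 0 <= S by apply: sumr_ge0 => s _; apply: prodr_ge0 => j _; exact: hw_ge0.
have He := he.
have hM1 : 1 <= M%:R :> R by rewrite ler1n.
have hMK' := hMK.
set m := M%:R in k1 k2 k4 k5 hM1 hMK' *.
set q0 := q x0 in k1 k6 hMK' *.
have hq0' : 0 <= q0 := hq0 x0.
have hp0e : p0 = q0 - e by rewrite /p0 hw_c1 /e /q0; ring.
have hm1 : (M.+1)%:R = m + 1 :> R by rewrite -natr1.
rewrite hm1 in k1.
have k1' : q0 * S * (m + 1) <= cnt%:R.
  by rewrite -ler_pdivlMr ?mulr_gt0 //; lra.
set c := cnt%:R in k1' k2.
have hdl' : dl = e / 4 by [].
have k4' : B1 * m * e ^+ 2 <= 16.
  have : B1 * (m * dl) ^+ 2 <= m by [].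
  rewrite hdl' => h; have : B1 * m * e ^+ 2 * m <= 16 * m by
    move: h; rewrite !exprMn; nra.
  by move=> h'; rewrite -(ler_pM2r (x := m)) //; lra.
have k5' : B2 * m * e ^+ 2 <= 16.
  have : B2 * (m * dl) ^+ 2 <= m by [].
  rewrite hdl' => h; have : B2 * m * e ^+ 2 * m <= 16 * m by
    move: h; rewrite !exprMn; nra.
  by move=> h'; rewrite -(ler_pM2r (x := m)) //; lra.
set Bs := B1 + B2.
have kB : Bs * m * e ^+ 2 <= 32 by rewrite /Bs; nra.
have kS : q0 - Bs <= q0 * S by rewrite /Bs; nra.
have k7 : (q0 - Bs) * (m + 1) <= m * (p0 + 2 * dl) + 1.
  apply: le_trans k2; apply: le_trans k1'; apply: ler_wpM2r => //; lra.
rewrite hp0e hdl' in k7.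
(* m * e / 2 <= 1 - q0 + Bs (m+1) <= 1 + 2 Bs m *)
have hBs : 0 <= Bs by rewrite /Bs; lra.
have hBm : Bs <= Bs * m by rewrite -[X in X <= _]mulr1; apply: ler_wpM2l.
have k8 : m * e <= 2 + 4 * Bs * m by lra.
have k9 : m * e * e ^+ 2 <= 2 * e ^+ 2 + 128 by nra.
move: hMK'; rewrite /K0 -/e ltr_pdivrMr // => hK.
have hK' : (2 + 128 / e ^+ 2) * e ^+ 2 < m * e * e ^+ 2.
  by rewrite ltr_pM2r // exprn_gt0.
have h128 : 128 / e ^+ 2 * e ^+ 2 = 128.
  by rewrite divfK // expf_neq0 // gt_eqF.
set z := 128 / e ^+ 2 in hK' h128.
set E2 := e ^+ 2 in hK' h128 k9.
set me := m * e in hK' k9.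
lra.
Qed.

End Main.


Theorem corollary3p3 (R : realType) (T : countType) (lt : rel T)
  (p q : T -> R) :
  strict_total_order lt -> is_pmf p -> is_pmf q -> p <> q ->
  exists M : nat, (1 <= M)%N /\
    forall (d : measure_display) (Omega : measurableType d)
      (P : probability Omega R) (X : nat -> Omega -> T) (U : nat -> Omega -> R),
      (forall i, (i <= M)%N -> forall A : set T, measurable (X i @^-1` A)) ->
      (forall i, (i <= M)%N -> measurable_fun setT (U i)) ->
      has_pmf_law P (X 0%N) q ->
      (forall j, (1 <= j <= M)%N -> has_pmf_law P (X j) p) ->
      (forall i, (i <= M)%N -> is_uniform01 P (U i)) ->
      mutually_independent P M X U ->
      exists k : nat, (k <= M)%N /\
        P [set w | rank_stat lt M X U w = k] <> ((M.+1)%:R^-1)%:E.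
Proof.
move=> [hirr _ _] [hp0 hp1] [hq0 hq1] hpq.
have [x0 hx0] := @exists_gt R T p q hp0 hq0 hp1 hq1 hpq.
exists (Num.truncn (K0 (q x0 - p x0))).+1; split => //.
move=> d Omega P X U hXm hUm hX0 hXj hU hind.
apply: contrapT => Hn.
apply: (@contra R T lt x0 d Omega P _ X U p q hirr hp0 hq0 _ hXm hUm hX0 hXj hind hx0).
- by [].
- exact: truncnS_gt.
- move=> k hk; apply: contrapT => hne; apply: Hn; by exists k.
Qed.
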